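(* For every point $y\in GZ(\lambda)$ there exists a unique enhanced Gelfand--Zetlin pattern $P$ with top row $\lambda$ such that $y\in C_P$.
   Context: Let $\lambda=(\lambda_1\ge\dots\ge\lambda_n)$ be a partition. Coordinates $y_{ij}$ ($i,j\ge1$, $i+j\le n$) on $\mathbb{R}^{n(n-1)/2}$, with $y_{0j}=\lambda_{n+1-j}$; $GZ(\lambda)$ is defined by $y_{i-1,j}\le y_{ij}\le y_{i-1,j+1}$. A GZ pattern with top row $\lambda$ is an integer array $a_{ij}$, $0\le i\le n-1$, $1\le j\le n-i$, with $a_{0j}=\lambda_{n+1-j}$ and $a_{i-1,j}\le a_{ij}\le a_{i-1,j+1}$. An enhanced GZ pattern is such an array with encircled entries and edges (each joining $a_{ij}$, $i\ge1$, with $a_{i-1,j}$ or $a_{i-1,j+1}$) such that: (1) row $0$ entries are encircled; (2) joined entries are equal, the lower one encircled; (3) for $i\ge1$: both $a_{ij},a_{i,j+1}$ are joined to $a_{i-1,j+1}$ iff both are joined to $a_{i+1,j}$; (4) if $a_{0j}=a_{0,j+1}$ then $a_{1j}$ is encircled and joined to both; (5) if $a_{i-1,j}<a_{i-1,j+1}$ and $a_{ij}=a_{i-1,j}$, then $a_{ij}$ is encircled and joined to $a_{i-1,j}$; (6) if $a_{i-1,j}<a_{i-1,j+1}$, $a_{ij}=a_{i-1,j+1}$, $a_{ij}$ encircled, then joined to $a_{i-1,j+1}$; (7) if $a_{i-1,j}=a_{i-1,j+1}=a_{ij}$ and the two upper entries are connected by a path of edges, then $a_{ij}$ is encircled and joined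 to both; (8) if $a_{i-1,j}=a_{i-1,j+1}=a_{ij}$ and $a_{ij}$ is encircled, it is joined to at least one of them. Cell $C_P$: for each $i\ge1$ impose: if $a_{ij}$ is joined to $a_{i-1,j}$ (resp. $a_{i-1,j+1}$), then $y_{ij}=y_{i-1,j}$ (resp. $y_{ij}=y_{i-1,j+1}$); if no edge goes up from $a_{ij}$ and it is encircled, $y_{ij}=a_{ij}$; if no edge goes up and it is not encircled, impose $a_{ij}-1<y_{ij}$ if $a_{ij}-a_{i-1,j}\ge2$, else $y_{i-1,j}<y_{ij}$, and $y_{ij}<y_{i-1,j+1}$ if $a_{i-1,j+1}=a_{ij}$, else $y_{ij}<a_{ij}$. Let $\widehat{C_P}$ be the set so defined, $L$ its affine span, and $C_P=\widehat{C_P}\cap(GZ(\lambda)\cap L)^0$, where $(\cdot)^0$ is the relative interior in $L$. *)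

(* Defs.v *)
From Stdlib Require Import Relations List.
From mathcomp Require Import all_boot all_order all_algebra.
From mathcomp Require Import reals.
Set Implicit Arguments. Unset Strict Implicit. Unset Printing Implicit Defensive.
Import Order.TTheory GRing.Theory Num.Theory.
Local Open Scope ring_scope.

(* Arrays indexed by (i, j) are represented by total functions nat -> nat -> _;
   only the values at the indices of the array are meaningful. *)

Definition entry (n i j : nat) : bool := (i < n)%N && (0 < j)%N && (j <= n - i)%N.

Definition coord (n i j : nat) : bool := (0 < i)%N && (0 < j)%N && (i + j <= n)%N.

Definition is_partition (n : nat) (lam : nat -> nat) : Prop :=
  forall k, (1 <= k)%N -> (k < n)%N -> (lam k.+1 <= lam k)%N.

Definition Yext (R : realType) (n : nat) (lam : nat -> nat) (y : nat -> nat -> R)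
  (i j : nat) : R := if i == 0%N then (lam (n.+1 - j)%N)%:R else y i j.

Definition inGZ (R : realType) (n : nat) (lam : nat -> nat) (y : nat -> nat -> R) : Prop :=
  forall i j, coord n i j ->
    Yext n lam y i.-1 j <= Yext n lam y i j /\ Yext n lam y i j <= Yext n lam y i.-1 j.+1.

(* pa i j = a_ij; circ i j : a_ij is encircled;
   eL i j : a_ij is joined to a_{i-1,j}; eR i j : a_ij is joined to a_{i-1,j+1}. *)
Record epattern := EPattern {
  pa : nat -> nat -> int;
  circ : nat -> nat -> bool;
  eL : nat -> nat -> bool;
  eR : nat -> nat -> bool }.

Definition edge_adj (n : nat) (P : epattern) (u v : nat * nat) : Prop :=
  let e := fun (p q : nat * nat) =>
    entry n p.1 p.2 /\ (0 < p.1)%N /\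
    ((eL P p.1 p.2 /\ q = (p.1.-1, p.2)) \/ (eR P p.1 p.2 /\ q = (p.1.-1, p.2.+1))) in
  e u v \/ e v u.

Definition edge_connected (n : nat) (P : epattern) : relation (nat * nat) :=
  clos_refl_trans (nat * nat) (edge_adj n P).

Definition GZpattern (n : nat) (lam : nat -> nat) (a : nat -> nat -> int) : Prop :=
  (forall j, entry n 0 j -> a 0%N j = (lam (n.+1 - j)%N)%:Z) /\
  (forall i j, entry n i j -> (0 < i)%N ->
     a i.-1 j <= a i j /\ a i j <= a i.-1 j.+1).

Definition enhanced (n : nat) (lam : nat -> nat) (P : epattern) : Prop :=
  let a := pa P in
  GZpattern n lam a /\
  (* (1) *)
  (forall j, entry n 0 j -> circ P 0%N j) /\
  (* (2) *)
  (forall i j, entry n i j -> (0 < i)%N ->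
     (eL P i j -> a i j = a i.-1 j /\ circ P i j) /\
     (eR P i j -> a i j = a i.-1 j.+1 /\ circ P i j)) /\
  (* (3) *)
  (forall i j, (1 <= i)%N -> (1 <= j)%N -> entry n i j.+1 ->
     (eR P i j && eL P i j.+1) = (eL P i.+1 j && eR P i.+1 j)) /\
  (* (4) *)
  (forall j, entry n 0 j -> entry n 0 j.+1 -> a 0%N j = a 0%N j.+1 ->
     [/\ circ P 1%N j, eL P 1%N j & eR P 1%N j]) /\
  (* (5) *)
  (forall i j, entry n i j -> (0 < i)%N ->
     a i.-1 j < a i.-1 j.+1 -> a i j = a i.-1 j -> circ P i j /\ eL P i j) /\
  (* (6) *)
  (forall i j, entry n i j -> (0 < i)%N ->
     a i.-1 j < a i.-1 j.+1 -> a i j = a i.-1 j.+1 -> circ P i j -> eR P i j) /\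
  (* (7) *)
  (forall i j, entry n i j -> (0 < i)%N ->
     a i.-1 j = a i.-1 j.+1 -> a i j = a i.-1 j ->
     edge_connected n P (i.-1, j) (i.-1, j.+1) ->
     [/\ circ P i j, eL P i j & eR P i j]) /\
  (* (8) *)
  (forall i j, entry n i j -> (0 < i)%N ->
     a i.-1 j = a i.-1 j.+1 -> a i j = a i.-1 j -> circ P i j ->
     eL P i j || eR P i j).

Definition same_pattern (n : nat) (P Q : epattern) : Prop :=
  forall i j, entry n i j ->
    [/\ pa P i j = pa Q i j, circ P i j = circ Q i j,
        ((0 < i)%N -> eL P i j = eL Q i j) & ((0 < i)%N -> eR P i j = eR Q i j)].

Definition Chat (R : realType) (n : nat) (lam : nat -> nat) (P : epattern)
  (y : nat -> nat -> R) : Prop :=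
  let Y := Yext n lam y in
  let a := pa P in
  forall i j, coord n i j ->
    (eL P i j -> Y i j = Y i.-1 j) /\
    (eR P i j -> Y i j = Y i.-1 j.+1) /\
    (~~ eL P i j -> ~~ eR P i j -> circ P i j -> Y i j = (a i j)%:~R) /\
    (~~ eL P i j -> ~~ eR P i j -> ~~ circ P i j ->
       (if (2%:Z <= a i j - a i.-1 j) then (a i j - 1)%:~R < Y i j else Y i.-1 j < Y i j) /\
       (if a i.-1 j.+1 == a i j then Y i j < Y i.-1 j.+1 else Y i j < (a i j)%:~R)).

Definition affine_span (R : realType) (n : nat) (S : (nat -> nat -> R) -> Prop)
  (z : nat -> nat -> R) : Prop :=
  exists s : seq (R * (nat -> nat -> R)),
    (forall p, Stdlib.Lists.List.In p s -> S p.2) /\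
    \sum_(p <- s) p.1 = 1 /\
    (forall i j, coord n i j -> z i j = \sum_(p <- s) p.1 * p.2 i j).

(* relative interior of T inside the affine subspace L (Euclidean topology;
   the sup-norm balls are used, which give the same topology) *)
Definition rel_interior (R : realType) (n : nat) (L T : (nat -> nat -> R) -> Prop)
  (x : nat -> nat -> R) : Prop :=
  L x /\ T x /\
  exists e : R, 0 < e /\
    forall z, L z -> (forall i j, coord n i j -> `|z i j - x i j| < e) -> T z.

Definition inCell (R : realType) (n : nat) (lam : nat -> nat) (P : epattern)
  (y : nat -> nat -> R) : Prop :=
  let L := affine_span n (Chat n lam P) in
  Chat n lam P y /\
  rel_interior n L (fun z => inGZ n lam z /\ L z) y.

(* Main.v *)
Require Import Defs.
From mathcomp Require Import all_boot all_order all_algebra reals.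
From mathcomp Require Import zify ring lra.
From Stdlib Require Import Relations ClassicalEpsilon.
Import Order.TTheory GRing.Theory Num.Theory.
Set Implicit Arguments. Unset Strict Implicit. Unset Printing Implicit Defensive.
Local Open Scope ring_scope.
Notation coord := Defs.coord.
Arguments Yext : simpl never.

Ltac nat_arith := unfold Defs.coord, entry in *;
  repeat match goal with H : is_true (_ && _) |- _ => apply andb_prop in H; destruct H end;
  repeat (apply/andP; split); lia.

Lemma coord_entry n i j : coord n i j -> entry n i j.
Proof. intros; nat_arith. Qed.
Lemma entry_coord n i j : entry n i j -> (0 < i)%N -> coord n i j.
Proof. intros; nat_arith. Qed.
Lemma coord_parL n i j : coord n i j -> entry n i.-1 j.
Proof. intros; nat_arith. Qed.
Lemma coord_parR n i j : coord n i j -> entry n i.-1 j.+1.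
Proof. intros; nat_arith. Qed.

Lemma int_aux1 (a : int) : (2 <= a + 1 - a) = false. Proof. lia. Qed.
Lemma int_aux2 (a b : int) : a <= b -> ~~ (a < b) -> b = a. Proof. move=> h1 /negP h2; lia. Qed.
Lemma int_aux3 (a : int) : (2 <= a - a) = false. Proof. lia. Qed.

Section Gen.
Variable R : realType.

Definition smallP (P : R -> Prop) :=
  exists2 t : R, 0 < t & forall t', 0 < t' -> t' <= t -> P t'.

Lemma smallP_and (P Q : R -> Prop) : smallP P -> smallP Q -> smallP (fun t => P t /\ Q t).
Proof.
move=> [t1 h1 H1] [t2 h2 H2].
exists (if t1 <= t2 then t1 else t2); first by case: (leP t1 t2).
move=> t' ht' hle; split.
- by apply: H1 => //; move: hle; case: (leP t1 t2) => h; lra.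
- by apply: H2 => //; move: hle; case: (leP t1 t2) => h; lra.
Qed.

Lemma smallP_triv (P : R -> Prop) : (forall t, P t) -> smallP P.
Proof. by move=> H; exists 1. Qed.

Lemma fin_min1 (P : nat -> R -> Prop) N :
  (forall k, (k < N)%N -> smallP (P k)) ->
  smallP (fun t => forall k, (k < N)%N -> P k t).
Proof.
elim: N => [|N IH] H; first by exists 1 => // t' _ _ k.
have := smallP_and (IH (fun k hk => H k (leqW hk))) (H N (ltnSn N)).
move=> [t ht Ht]; exists t => // t' h1 h2 k.
rewrite ltnS leq_eqVlt => /orP[/eqP ->|hk].
- by have [] := Ht t' h1 h2.
- by have [+ _] := Ht t' h1 h2; apply.
Qed.

Lemma fin_min2 (P : nat -> nat -> R -> Prop) N :
  (forall i j, (i < N)%N -> (j < N)%N -> smallP (P i j)) ->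
  smallP (fun t => forall i j, (i < N)%N -> (j < N)%N -> P i j t).
Proof.
move=> H.
have := fin_min1 (P := fun i t => forall j, (j < N)%N -> P i j t) (N := N).
case.
  by move=> i hi; apply: fin_min1 => j hj; apply: H.
move=> t ht Ht; exists t => // t' h1 h2 i j hi hj.
exact: Ht.
Qed.

End Gen.

Section Main.
Variable R : realType.
Variable n : nat.
Variable lam : nat -> nat.
Hypothesis Hlam : is_partition n lam.
Variable y : nat -> nat -> R.
Hypothesis Hy : inGZ n lam y.
Notation Y := (Yext n lam y).

Lemma gzy i j : coord n i j -> Y i.-1 j <= Y i j /\ Y i j <= Y i.-1 j.+1.
Proof. exact: Hy. Qed.

Definition stepA (al ar : int) (yl yr yv : R) : int :=
  if yv == yl then al else if yv == yr then ar
  else if yv <= al%:~R then (if al < ar then al + 1 else ar) else Num.ceil yv.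

Fixpoint aP i j : int :=
  if i is i'.+1 then stepA (aP i' j) (aP i' j.+1) (Y i' j) (Y i' j.+1) (Y i'.+1 j)
  else (lam (n.+1 - j))%:Z.

Definition circP i j : bool :=
  if i is i'.+1 then [|| Y i j == Y i' j, Y i j == Y i' j.+1 |
     ((Num.ceil (Y i j))%:~R == Y i j) && ((aP i' j)%:~R < Y i j)] else true.
Definition eLP i j : bool := if i is i'.+1 then Y i j == Y i' j else false.
Definition eRP i j : bool := if i is i'.+1 then Y i j == Y i' j.+1 else false.
Definition PP := EPattern aP circP eLP eRP.

Lemma aPS i j : (0 < i)%N ->
  aP i j = stepA (aP i.-1 j) (aP i.-1 j.+1) (Y i.-1 j) (Y i.-1 j.+1) (Y i j).
Proof. by case: i. Qed.

Lemma stepA_bounds al ar yl yr yv : al <= ar -> yl <= al%:~R -> yr <= ar%:~R ->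
  yl <= yv -> yv <= yr ->
  [/\ al <= stepA al ar yl yr yv, stepA al ar yl yr yv <= ar &
      yv <= (stepA al ar yl yr yv)%:~R].
Proof.
move=> hlr hl hr h1 h2; rewrite /stepA.
case: eqP => [->|e1]; first by split.
case: eqP => [->|e2]; first by split.
case: ifP => h3.
  case: ifP => h4; split => //; try lia.
  - rewrite intrD; lra.
  - have -> : ar = al by lia. done.
have h3' : al%:~R < yv by rewrite ltNge h3.
split.
- by apply: ltW; rewrite ceil_gt_int.
- by rewrite ceil_le_int; lra.
- exact: Num.Theory.ceil_ge.
Qed.

Lemma Y0 j : Y 0 j = (lam (n.+1 - j))%:R. Proof. by []. Qed.
Lemma aP0 j : ((aP 0 j)%:~R : R) = Y 0 j. Proof. by []. Qed.

Lemma invP i : forall j, entry n i j ->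
  Y i j <= (aP i j)%:~R /\ (entry n i j.+1 -> aP i j <= aP i j.+1).
Proof.
elim: i => [|i IH] j hj.
  split; first by rewrite aP0.
  move=> hj1 /=.
  have hk1 : (1 <= n - j)%N by nat_arith.
  have hk2 : (n - j < n)%N by nat_arith.
  have := Hlam hk1 hk2.
  have -> : (n.+1 - j = (n - j).+1)%N by nat_arith.
  have -> : (n.+1 - j.+1 = (n - j))%N by nat_arith.
  by rewrite lez_nat.
have hc : coord n i.+1 j by apply: entry_coord.
have [hl1 hl2] := IH j (coord_parL hc).
have [hr1 _] := IH j.+1 (coord_parR hc).
have [g1 g2] := gzy hc.
have [b1 b2 b3] := stepA_bounds (hl2 (coord_parR hc)) hl1 hr1 g1 g2.
split; first exact: b3.
move=> hj1.
have hc1 : coord n i.+1 j.+1 by apply: entry_coord.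
have [hr1' hr2'] := IH j.+1 (coord_parL hc1).
have [hrr1 _] := IH j.+2 (coord_parR hc1).
have [g1' g2'] := gzy hc1.
have [b1' b2' b3'] := stepA_bounds (hr2' (coord_parR hc1)) hr1' hrr1 g1' g2'.
rewrite /=; exact: le_trans b2 b1'.
Qed.


Lemma aPS' i j : aP i.+1 j = stepA (aP i j) (aP i j.+1) (Y i j) (Y i j.+1) (Y i.+1 j).
Proof. by []. Qed.

Lemma stepA_eqL al ar yl yr yv : yv = yl -> stepA al ar yl yr yv = al.
Proof. by rewrite /stepA => ->; rewrite eqxx. Qed.
Lemma stepA_eqR al ar yl yr yv : yv <> yl -> yv = yr -> stepA al ar yl yr yv = ar.
Proof. by rewrite /stepA => /eqP/negPf -> ->; rewrite eqxx. Qed.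
Lemma stepA_int al ar yl yr yv : yv <> yl -> yv <> yr -> al%:~R < yv ->
  stepA al ar yl yr yv = Num.ceil yv.
Proof.
rewrite /stepA => /eqP/negPf -> /eqP/negPf -> h.
by rewrite leNgt h.
Qed.
Lemma stepA_low al ar yl yr yv : yv <> yl -> yv <> yr -> yv <= al%:~R ->
  stepA al ar yl yr yv = if al < ar then al + 1 else ar.
Proof. by rewrite /stepA => /eqP/negPf -> /eqP/negPf -> ->. Qed.

Lemma stepA_L_inv al ar yl yr yv : al <= ar -> yv <> yl ->
  stepA al ar yl yr yv = al -> al = ar.
Proof.
move=> hlr h1; rewrite /stepA; move/eqP/negPf: (h1) => ->.
case: eqP => [_ ->//|h2].
case: ifP => h3.
  case: ifP => h4; first lia.
  by move/negbT: h4; rewrite -leNgt => h4 h5; lia.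
have h3' : al%:~R < yv by rewrite ltNge h3.
by move: h3'; rewrite -ceil_gt_int => h4 h5; move: h4; rewrite h5 ltxx.
Qed.

Lemma stepP i j : coord n i j ->
  [/\ aP i.-1 j <= aP i j, aP i j <= aP i.-1 j.+1, Y i j <= (aP i j)%:~R,
      aP i.-1 j <= aP i.-1 j.+1 &
      Y i.-1 j <= (aP i.-1 j)%:~R /\ Y i.-1 j.+1 <= (aP i.-1 j.+1)%:~R].
Proof.
move=> hc.
have [hl1 hl2] := invP (coord_parL hc).
have [hr1 _] := invP (coord_parR hc).
have [g1 g2] := gzy hc.
have hlr := hl2 (coord_parR hc).
case: i hc hl1 hl2 hr1 g1 g2 hlr => [|i] hc hl1 hl2 hr1 g1 g2 hlr.
  exfalso; move: hc; clear; intros; nat_arith.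
have [b1 b2 b3] := stepA_bounds hlr hl1 hr1 g1 g2.
by rewrite aPS'; split.
Qed.

Lemma eqaP k : forall m, entry n k m -> entry n k m.+1 -> Y k m = Y k m.+1 ->
  aP k m = aP k m.+1.
Proof.
elim: k => [|k IH] m h1 h2 e.
  move: e; rewrite !Y0 => /eqP; rewrite eqr_nat => /eqP /= -> //.
have hc1 : coord n k.+1 m by apply: entry_coord.
have hc2 : coord n k.+1 m.+1 by apply: entry_coord.
have [g1 g2] := gzy hc1; have [g3 g4] := gzy hc2.
simpl in g1, g2, g3, g4.
have e2 : Y k.+1 m.+1 = Y k m.+1 by apply/eqP; rewrite eq_le; apply/andP; split; lra.
rewrite ?aPS' (stepA_eqL _ _ _ e2).
have [e3|e3] := eqVneq (Y k.+1 m) (Y k m).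
  rewrite (stepA_eqL _ _ _ e3); apply: IH.
  - exact: coord_parL hc1.
  - exact: coord_parR hc1.
  - lra.
by rewrite (stepA_eqR _ _ (elimN eqP e3)) //; lra.
Qed.

Lemma conn_ind (Q : epattern) (T : Type) (f : nat * nat -> T) :
  (forall p : nat * nat, entry n p.1 p.2 -> (0 < p.1)%N ->
     (eL Q p.1 p.2 -> f p = f (p.1.-1, p.2)) /\
     (eR Q p.1 p.2 -> f p = f (p.1.-1, p.2.+1))) ->
  forall u v, edge_connected n Q u v -> f u = f v.
Proof.
move=> H u v; elim => [u' v' hadj|u'|u' v' w' _ IH1 _ IH2] //; last by rewrite IH1.
move: hadj; rewrite /edge_adj /=.
case=> -[he [hp [[hl ->]|[hr ->]]]].
- by apply: (proj1 (H _ he hp)).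
- by apply: (proj2 (H _ he hp)).
- by symmetry; apply: (proj1 (H _ he hp)).
- by symmetry; apply: (proj2 (H _ he hp)).
Qed.

Lemma connY_P u v : edge_connected n PP u v -> Y u.1 u.2 = Y v.1 v.2.
Proof.
apply: (conn_ind (f := fun p => Y p.1 p.2)) => -[[|i] j] /= _ // _.
by split => /eqP.
Qed.

Lemma P_gz : GZpattern n lam aP.
Proof.
split => // i j h hi.
by have [] := stepP (entry_coord h hi); split.
Qed.

Lemma P2 i j : entry n i j -> (0 < i)%N ->
  (eLP i j -> aP i j = aP i.-1 j /\ circP i j) /\
  (eRP i j -> aP i j = aP i.-1 j.+1 /\ circP i j).
Proof.
case: i => [|i] // h _ /=; split => /eqP e.
  by rewrite stepA_eqL // e eqxx.
split; last by rewrite e eqxx orbT.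
have hc : coord n i.+1 j by apply: entry_coord.
have [g1 g2] := gzy hc; simpl in g1, g2.
have [e3|e3] := eqVneq (Y i.+1 j) (Y i j).
  rewrite ?aPS' (stepA_eqL _ _ _ e3); apply: eqaP.
  - exact: coord_parL hc.
  - exact: coord_parR hc.
  - lra.
by rewrite ?aPS' (stepA_eqR _ _ (elimN eqP e3)).
Qed.

Lemma P3 i j : (1 <= i)%N -> (1 <= j)%N -> entry n i j.+1 ->
  (eRP i j && eLP i j.+1) = (eLP i.+1 j && eRP i.+1 j).
Proof.
case: i => [|i] // _ hj he /=.
have c1 : coord n i.+1 j by nat_arith.
have c2 : coord n i.+1 j.+1 by nat_arith.
have c3 : coord n i.+2 j by nat_arith.
have [g1 g2] := gzy c1; have [g3 g4] := gzy c2; have [g5 g6] := gzy c3.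
simpl in g1, g2, g3, g4, g5, g6.
by apply/idP/idP => /andP[/eqP e1 /eqP e2]; apply/andP; split; apply/eqP; lra.
Qed.

Lemma P4 j : entry n 0 j -> entry n 0 j.+1 -> aP 0 j = aP 0 j.+1 ->
  [/\ circP 1 j, eLP 1 j & eRP 1 j].
Proof.
move=> h1 h2 /= e.
have e' : Y 0 j = Y 0 j.+1 by rewrite !Y0; case: e => ->.
have c : coord n 1 j by nat_arith.
have [g1 g2] := gzy c; simpl in g1, g2.
have e1 : Y 1 j = Y 0 j by lra.
have e2 : Y 1 j = Y 0 j.+1 by lra.
by rewrite /= e1 eqxx -e1 e2 eqxx.
Qed.

Lemma P5 i j : entry n i j -> (0 < i)%N -> aP i.-1 j < aP i.-1 j.+1 ->
  aP i j = aP i.-1 j -> circP i j /\ eLP i j.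
Proof.
case: i => [|i] // h _ /= hlt.
have [e|e] := eqVneq (Y i.+1 j) (Y i j); first by [].
rewrite ?aPS' => /stepA_L_inv => /(_ (ltW hlt) (elimN eqP e)) he.
by move: hlt; rewrite he ltxx.
Qed.

Lemma P6 i j : entry n i j -> (0 < i)%N -> aP i.-1 j < aP i.-1 j.+1 ->
  aP i j = aP i.-1 j.+1 -> circP i j -> eRP i j.
Proof.
case: i => [|i] // h _ /= hlt ha.
have hc : coord n i.+1 j by apply: entry_coord.
have [_ _ _ _ [_ hr]] := stepP hc; simpl in hr.
have [g1 g2] := gzy hc; simpl in g1, g2.
case/or3P => [/eqP e|//|/andP[/eqP e1 e2]].
  by move: ha; rewrite ?aPS' stepA_eqL // => he; move: hlt; rewrite he ltxx.
have [e3|e3] := eqVneq (Y i.+1 j) (Y i j.+1); first by [].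
have [e4|e4] := eqVneq (Y i.+1 j) (Y i j).
  by move: ha; rewrite ?aPS' stepA_eqL // => he; move: hlt; rewrite he ltxx.
move: ha; rewrite ?aPS' stepA_int //; [|exact/eqP|exact/eqP].
move=> he; move: e1; rewrite he => e1.
have : Y i.+1 j < Y i j.+1 by rewrite lt_neqAle e3 g2.
lra.
Qed.

Lemma P7 i j : entry n i j -> (0 < i)%N -> aP i.-1 j = aP i.-1 j.+1 ->
  aP i j = aP i.-1 j -> edge_connected n PP (i.-1, j) (i.-1, j.+1) ->
  [/\ circP i j, eLP i j & eRP i j].
Proof.
case: i => [|i] // h _ /= _ _ /connY_P /= e.
have hc : coord n i.+1 j by apply: entry_coord.
have [g1 g2] := gzy hc; simpl in g1, g2.
have e1 : Y i.+1 j = Y i j by lra.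
have e2 : Y i.+1 j = Y i j.+1 by lra.
by rewrite e1 eqxx -e1 e2 eqxx.
Qed.

Lemma P8 i j : entry n i j -> (0 < i)%N -> aP i.-1 j = aP i.-1 j.+1 ->
  aP i j = aP i.-1 j -> circP i j -> eLP i j || eRP i j.
Proof.
case: i => [|i] // h _ /= _ ha.
case/or3P => [->//|->|/andP[/eqP e1 e2]]; first by rewrite orbT.
have [e3|e3] := eqVneq (Y i.+1 j) (Y i j.+1); first by rewrite orbT.
have [e4|e4] := eqVneq (Y i.+1 j) (Y i j); first by [].
move: ha; rewrite ?aPS' stepA_int //; [|exact/eqP|exact/eqP].
by move=> he; move: e2; rewrite -ceil_gt_int he ltxx.
Qed.

Lemma enhP : enhanced n lam PP.
Proof.
split; first exact: P_gz.
split; first by [].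
split; first exact: P2.
split; first exact: P3.
split; first exact: P4.
split; first exact: P5.
split; first exact: P6.
split; first exact: P7.
exact: P8.
Qed.

Lemma cr_parL i j : coord n i j -> coord n i.-1 j \/ i.-1 = 0%N.
Proof.
case: i => [|[|i]] h /=; [by right | by right | left; nat_arith].
Qed.
Lemma cr_parR i j : coord n i j -> coord n i.-1 j.+1 \/ i.-1 = 0%N.
Proof.
case: i => [|[|i]] h /=; [by right | by right | left; nat_arith].
Qed.

Lemma Yext_coord (z : nat -> nat -> R) i j : coord n i j -> Yext n lam z i j = z i j.
Proof. by case: i => [|i] h; [exfalso; nat_arith|]. Qed.

Lemma Yext_close (z : nat -> nat -> R) (t : R) i j :
  (forall i' j', coord n i' j' -> `|z i' j' - y i' j'| < t) -> 0 < t ->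
  coord n i j \/ i = 0%N -> `|Yext n lam z i j - Y i j| < t.
Proof.
move=> H ht [hc|->].
- by rewrite !Yext_coord //; apply: H.
- by rewrite /Yext /= subrr normr0.
Qed.

Lemma Yext_closew (z : nat -> nat -> R) (t : R) i j :
  (forall i' j', coord n i' j' -> `|z i' j' - y i' j'| <= t) -> 0 <= t ->
  coord n i j \/ i = 0%N -> `|Yext n lam z i j - Y i j| <= t.
Proof.
move=> H ht [hc|->].
- by rewrite !Yext_coord //; apply: H.
- by rewrite /Yext /= subrr normr0.
Qed.

Lemma sum_ext (s : seq (R * (nat -> nat -> R))) (f g : (nat -> nat -> R) -> R) :
  (forall p, List.In p s -> f p.2 = g p.2) ->
  \sum_(p <- s) p.1 * f p.2 = \sum_(p <- s) p.1 * g p.2.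
Proof.
elim: s => [|p s IH] H; first by rewrite !big_nil.
rewrite !big_cons H /=; last by left.
by rewrite IH // => q hq; apply: H; right.
Qed.

Lemma aff_Y (S : (nat -> nat -> R) -> Prop) z : affine_span n S z ->
  exists s : seq (R * (nat -> nat -> R)), (forall p, List.In p s -> S p.2) /\
  forall i j, coord n i j \/ i = 0%N ->
    Yext n lam z i j = \sum_(p <- s) p.1 * Yext n lam p.2 i j.
Proof.
case=> s [hS [h1 h2]]; exists s; split => // i j [hc|->].
- rewrite Yext_coord // h2 //; apply: eq_bigr => p _.
  by rewrite Yext_coord.
- rewrite /Yext eqxx.
  rewrite /Yext.
  by rewrite -mulr_suml h1 mul1r.
Qed.

Lemma aff_eq (S : (nat -> nat -> R) -> Prop) z i1 j1 i2 j2 :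
  affine_span n S z -> coord n i1 j1 \/ i1 = 0%N -> coord n i2 j2 \/ i2 = 0%N ->
  (forall w, S w -> Yext n lam w i1 j1 = Yext n lam w i2 j2) ->
  Yext n lam z i1 j1 = Yext n lam z i2 j2.
Proof.
move=> /aff_Y [s [hs H]] h1 h2 HS.
rewrite (H _ _ h1) (H _ _ h2).
apply: (sum_ext (f := fun w => Yext n lam w i1 j1) (g := fun w => Yext n lam w i2 j2)) => p hp.
exact: HS (hs p hp).
Qed.

Lemma aff_single (S : (nat -> nat -> R) -> Prop) w : S w -> affine_span n S w.
Proof.
move=> hw; exists [:: (1, w)]; split.
  by move=> p [<-|[]].
split; first by rewrite big_cons big_nil addr0.
by move=> i j _; rewrite big_cons big_nil addr0 mul1r.
Qed.

Lemma ChatP : Chat n lam PP y.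
Proof.
move=> i j hc.
case: i hc => [|i] hc; first by exfalso; nat_arith.
have [b1 b2 b3 b4 [b5 b6]] := stepP hc; simpl in b1, b2, b3, b4, b5, b6.
have [g1 g2] := gzy hc; simpl in g1, g2.
rewrite /=; split; first by move/eqP.
split; first by move/eqP.
have [e1|e1] := eqVneq (Y i.+1 j) (Y i j) => //.
have [e2|e2] := eqVneq (Y i.+1 j) (Y i j.+1) => //.
split.
  move=> _ _ /andP[/eqP e3 e4].
  by rewrite stepA_int //; [exact/eqP|exact/eqP].
move=> _ _ hnc.
have l1 : Y i j < Y i.+1 j by rewrite lt_neqAle eq_sym e1 g1.
have l2 : Y i.+1 j < Y i j.+1 by rewrite lt_neqAle e2 g2.
case: (leP (Y i.+1 j) (aP i j)%:~R) => h.
  rewrite stepA_low //; [|exact/eqP|exact/eqP].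
  have [h3|h3] := boolP (aP i j < aP i j.+1); rewrite ?h3 ?(negbTE h3).
    split; first by rewrite int_aux1.
    case: ifPn => h4 //; rewrite intrD; lra.
  rewrite (int_aux2 b4 h3).
  split; first by rewrite int_aux3.
  by rewrite eqxx.
rewrite stepA_int //; [|exact/eqP|exact/eqP].
move: hnc; rewrite h andbT => hnc.
split; first by case: ifPn => h4 //; exact: ceilB1_lt.
case: ifPn => h4 //.
by rewrite lt_neqAle eq_sym hnc ceil_ge.
Qed.

Lemma eLP_of i j : coord n i j -> Y i j = Y i.-1 j -> eLP i j.
Proof. by case: i => [|i] hc /= e; [exfalso; nat_arith | apply/eqP]. Qed.
Lemma eRP_of i j : coord n i j -> Y i j = Y i.-1 j.+1 -> eRP i j.
Proof. by case: i => [|i] hc /= e; [exfalso; nat_arith | apply/eqP]. Qed.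

Lemma cellP : inCell n lam PP y.
Proof.
split; first exact: ChatP.
split; first exact: aff_single ChatP.
split; first by split; [exact: Hy | exact: aff_single ChatP].
pose Pr i j t := coord n i j -> forall z, affine_span n (Chat n lam PP) z ->
  (forall i' j', coord n i' j' -> `|z i' j' - y i' j'| < t) ->
  Yext n lam z i.-1 j <= Yext n lam z i j /\ Yext n lam z i j <= Yext n lam z i.-1 j.+1.
have := fin_min2 (P := Pr) (N := n.+1).
case.
  move=> i j hi hj.
  have [hc|hc] := boolP (coord n i j); last first.
    by apply: smallP_triv => t /(negP hc).
  have [g1 g2] := gzy hc.
  have hcl := cr_parL hc; have hcr := cr_parR hc.
  have hci : coord n i j \/ i = 0%N by left.
  have [e1|e1] := eqVneq (Y i j) (Y i.-1 j);
  have [e2|e2] := eqVneq (Y i j) (Y i.-1 j.+1).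
  - apply: smallP_triv => t _ z hz _.
    have E1 : Yext n lam z i.-1 j = Yext n lam z i j.
      apply: (aff_eq hz hcl hci) => w hw; symmetry.
      have [+ _] := hw i j hc; apply.
      exact: eLP_of hc e1.
    have E2 : Yext n lam z i.-1 j.+1 = Yext n lam z i j.
      apply: (aff_eq hz hcr hci) => w hw; symmetry.
      have [_ [+ _]] := hw i j hc; apply.
      exact: eRP_of hc e2.
    by rewrite E1 E2.
  - have l2 : Y i j < Y i.-1 j.+1 by rewrite lt_neqAle e2 g2.
    exists ((Y i.-1 j.+1 - Y i j) / 2); first lra.
    move=> t ht htl _ z hz hzt.
    have E1 : Yext n lam z i.-1 j = Yext n lam z i j.
      apply: (aff_eq hz hcl hci) => w hw; symmetry.
      have [+ _] := hw i j hc; apply.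
      exact: eLP_of hc e1.
    split; first by rewrite E1.
    have := Yext_close hzt ht hci; have := Yext_close hzt ht hcr.
    rewrite !ltr_distl => /andP[h1 h2] /andP[h3 h4]; lra.
  - have l1 : Y i.-1 j < Y i j by rewrite lt_neqAle eq_sym e1 g1.
    exists ((Y i j - Y i.-1 j) / 2); first lra.
    move=> t ht htl _ z hz hzt.
    have E2 : Yext n lam z i.-1 j.+1 = Yext n lam z i j.
      apply: (aff_eq hz hcr hci) => w hw; symmetry.
      have [_ [+ _]] := hw i j hc; apply.
      exact: eRP_of hc e2.
    split; last by rewrite E2.
    have := Yext_close hzt ht hci; have := Yext_close hzt ht hcl.
    rewrite !ltr_distl => /andP[h1 h2] /andP[h3 h4]; lra.
  - have l1 : Y i.-1 j < Y i j by rewrite lt_neqAle eq_sym e1 g1.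
    have l2 : Y i j < Y i.-1 j.+1 by rewrite lt_neqAle e2 g2.
    exists (Num.min ((Y i j - Y i.-1 j) / 2) ((Y i.-1 j.+1 - Y i j) / 2)).
      by rewrite lt_min; apply/andP; split; lra.
    move=> t ht; rewrite le_min => /andP[htl1 htl2] _ z hz hzt.
    have := Yext_close hzt ht hci; have := Yext_close hzt ht hcl;
    have := Yext_close hzt ht hcr.
    rewrite !ltr_distl => /andP[h1 h2] /andP[h3 h4] /andP[h5 h6]; split; lra.
move=> t ht Ht; exists t; split => // z hz hzt; split => //.
move=> i j hc; apply: (Ht t ht (lexx t) i j) => //; nat_arith.
Qed.

Lemma conn_sym (Q : epattern) u v : edge_connected n Q u v -> edge_connected n Q v u.
Proof.
elim => [u' v' hadj|u'|u' v' w' _ IH1 _ IH2].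
- by apply: rt_step; move: hadj; rewrite /edge_adj /=; case=> h; [right|left].
- exact: rt_refl.
- exact: rt_trans IH2 IH1.
Qed.

Definition SC (Q : epattern) (z : nat -> nat -> R) i j :=
  (if (2%:Z <= pa Q i j - pa Q i.-1 j) then ((pa Q i j - 1)%:~R < Yext n lam z i j)
   else Yext n lam z i.-1 j < Yext n lam z i j) /\
  (if pa Q i.-1 j.+1 == pa Q i j then Yext n lam z i j < Yext n lam z i.-1 j.+1
   else Yext n lam z i j < (pa Q i j)%:~R).

Lemma smallP_impl (P Q : R -> Prop) : (forall t, P t -> Q t) -> smallP P -> smallP Q.
Proof. by move=> H [t ht Ht]; exists t => // t' h1 h2; apply: H; apply: Ht. Qed.

Section QS.
Variable Q : epattern.
Hypothesis HQe : enhanced n lam Q.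
Hypothesis HQc : inCell n lam Q y.
Notation a := (pa Q).

Lemma Qgz0 j : entry n 0 j -> a 0 j = (lam (n.+1 - j))%:Z.
Proof. by case: HQe => [[H _] _]; apply: H. Qed.
Lemma Qgz i j : coord n i j -> a i.-1 j <= a i j /\ a i j <= a i.-1 j.+1.
Proof. move=> hc; case: HQe => [[_ H] _]; apply: H; [exact: coord_entry|nat_arith]. Qed.
Lemma Q1 j : entry n 0 j -> circ Q 0 j.
Proof. by case: HQe => _ [H _]; apply: H. Qed.
Lemma Q2 i j : coord n i j ->
  (eL Q i j -> a i j = a i.-1 j /\ circ Q i j) /\ (eR Q i j -> a i j = a i.-1 j.+1 /\ circ Q i j).
Proof. move=> hc; case: HQe => _ [_ [H _]]; apply: H; [exact: coord_entry|nat_arith]. Qed.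
Lemma Q4 j : entry n 0 j -> entry n 0 j.+1 -> a 0%N j = a 0%N j.+1 ->
     [/\ circ Q 1%N j, eL Q 1%N j & eR Q 1%N j].
Proof. by case: HQe => _ [_ [_ [_ [H _]]]]; apply: H. Qed.
Lemma Q5 i j : coord n i j -> a i.-1 j < a i.-1 j.+1 -> a i j = a i.-1 j -> circ Q i j /\ eL Q i j.
Proof. move=> hc; case: HQe => _ [_ [_ [_ [_ [H _]]]]]; apply: H; [exact: coord_entry|nat_arith]. Qed.
Lemma Q6 i j : coord n i j -> a i.-1 j < a i.-1 j.+1 -> a i j = a i.-1 j.+1 -> circ Q i j -> eR Q i j.
Proof. move=> hc; case: HQe => _ [_ [_ [_ [_ [_ [H _]]]]]]; apply: H; [exact: coord_entry|nat_arith]. Qed.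
Lemma Q7 i j : coord n i j -> a i.-1 j = a i.-1 j.+1 -> a i j = a i.-1 j ->
     edge_connected n Q (i.-1, j) (i.-1, j.+1) -> [/\ circ Q i j, eL Q i j & eR Q i j].
Proof. move=> hc; case: HQe => _ [_ [_ [_ [_ [_ [_ [H _]]]]]]]; apply: H; [exact: coord_entry|nat_arith]. Qed.
Lemma Q8 i j : coord n i j -> a i.-1 j = a i.-1 j.+1 -> a i j = a i.-1 j -> circ Q i j -> eL Q i j || eR Q i j.
Proof. move=> hc; case: HQe => _ [_ [_ [_ [_ [_ [_ [_ H]]]]]]]; apply: H; [exact: coord_entry|nat_arith]. Qed.

Lemma QChat i j : coord n i j ->
    (eL Q i j -> Y i j = Y i.-1 j) /\
    (eR Q i j -> Y i j = Y i.-1 j.+1) /\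
    (~~ eL Q i j -> ~~ eR Q i j -> circ Q i j -> Y i j = (a i j)%:~R) /\
    (~~ eL Q i j -> ~~ eR Q i j -> ~~ circ Q i j -> SC Q y i j).
Proof. by case: HQc => H _; apply: H. Qed.

Lemma invQ i : forall j, entry n i j -> Y i j <= (a i j)%:~R.
Proof.
elim: i => [|i IH] j hj.
  by rewrite Qgz0 // Y0.
have hc : coord n i.+1 j by apply: entry_coord.
have [h1 [h2 [h3 h4]]] := QChat hc.
have [hL hR] := Q2 hc.
simpl in h1, h2, h3, h4, hL, hR.
case hl: (eL Q i.+1 j).
  by rewrite (h1 hl) (proj1 (hL hl)); apply: IH; exact: coord_parL hc.
case hr: (eR Q i.+1 j).
  by rewrite (h2 hr) (proj1 (hR hr)); apply: IH; exact: coord_parR hc.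
case hci: (circ Q i.+1 j).
  by rewrite h3 ?hl ?hr.
have [_] := h4 (negbT hl) (negbT hr) (negbT hci).
have := IH j.+1 (coord_parR hc); simpl.
case: eqP => [<-|_] h5 h6; lra.
Qed.

Lemma connQ u v : edge_connected n Q u v -> Y u.1 u.2 = Y v.1 v.2 /\ a u.1 u.2 = a v.1 v.2.
Proof.
move=> h.
suff : (Y u.1 u.2, a u.1 u.2) = (Y v.1 v.2, a v.1 v.2) by case=> -> ->.
move: h; apply: (conn_ind (f := fun p => (Y p.1 p.2, a p.1 p.2))) => p he hp.
have hc : coord n p.1 p.2 by apply: entry_coord.
have [h1 [h2 _]] := QChat hc; have [hL hR] := Q2 hc.
split => h.
- by rewrite (h1 h) (proj1 (hL h)).
- by rewrite (h2 h) (proj1 (hR h)).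
Qed.

Lemma Cnot x i j : Y x.1 x.2 < (a x.1 x.2)%:~R -> Y i j = (a i j)%:~R ->
  ~ edge_connected n Q x (i, j).
Proof.
move=> h1 h2 /connQ [/= e1 e2].
by move: h1; rewrite e1 e2 h2 ltxx.
Qed.

Lemma Y_row0 j : entry n 0 j -> Y 0 j = (a 0 j)%:~R.
Proof. by move=> h; rewrite Qgz0. Qed.

Definition zp (x : nat * nat) (d : R) : nat -> nat -> R :=
  fun i j => if excluded_middle_informative (edge_connected n Q x (i, j))
             then y i j + d else y i j.

Lemma zpY_in x d i j : coord n i j -> edge_connected n Q x (i, j) ->
  Yext n lam (zp x d) i j = Y i j + d.
Proof.
move=> hc h; rewrite !Yext_coord // /zp.
by case: excluded_middle_informative.
Qed.

Lemma zpY_out x d i j : coord n i j \/ i = 0%N ->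
  (i = 0%N \/ ~ edge_connected n Q x (i, j)) -> Yext n lam (zp x d) i j = Y i j.
Proof.
case=> [hc|->] //.
case=> [E|h]; first by move: hc; rewrite E => hc; exfalso; nat_arith.
rewrite !Yext_coord // /zp.
by case: excluded_middle_informative.
Qed.

Arguments zpY_in : clear implicits.
Arguments zpY_out : clear implicits.

Lemma margin1 i j : coord n i j -> ~~ eL Q i j -> ~~ eR Q i j -> ~~ circ Q i j ->
  smallP (fun t => forall z, (forall i' j', coord n i' j' -> `|z i' j' - y i' j'| <= t) ->
     SC Q z i j).
Proof.
move=> hc hl hr hci.
have [hlo hup] := (QChat hc).2.2.2 hl hr hci.
have hci' : coord n i j \/ i = 0%N by left.
have hcl := cr_parL hc; have hcr := cr_parR hc.
pose cl t (z : nat -> nat -> R) :=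
  forall i' j', coord n i' j' -> `|z i' j' - y i' j'| <= t.
have L1 : smallP (fun t => forall z, cl t z ->
  (if (2%:Z <= a i j - a i.-1 j) then ((a i j - 1)%:~R < Yext n lam z i j)
   else Yext n lam z i.-1 j < Yext n lam z i j)).
  move: hlo; case: ifPn => h2 hlo.
    exists ((Y i j - (a i j - 1)%:~R) / 2); first lra.
    move=> t ht htl z hz.
    have := Yext_closew hz (ltW ht) hci'.
    rewrite ler_distl => /andP[h3 h4]; lra.
  exists ((Y i j - Y i.-1 j) / 3); first lra.
  move=> t ht htl z hz.
  have := Yext_closew hz (ltW ht) hci'; have := Yext_closew hz (ltW ht) hcl.
  rewrite !ler_distl => /andP[h3 h4] /andP[h5 h6]; lra.
have L2 : smallP (fun t => forall z, cl t z ->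
  (if a i.-1 j.+1 == a i j then Yext n lam z i j < Yext n lam z i.-1 j.+1
   else Yext n lam z i j < (a i j)%:~R)).
  move: hup; case: ifPn => h2 hup.
    exists ((Y i.-1 j.+1 - Y i j) / 3); first lra.
    move=> t ht htl z hz.
    have := Yext_closew hz (ltW ht) hci'; have := Yext_closew hz (ltW ht) hcr.
    rewrite !ler_distl => /andP[h3 h4] /andP[h5 h6]; lra.
  exists (((a i j)%:~R - Y i j) / 2); first lra.
  move=> t ht htl z hz.
  have := Yext_closew hz (ltW ht) hci'.
  rewrite ler_distl => /andP[h3 h4]; lra.
apply: smallP_impl (smallP_and L1 L2).
by move=> t [H1 H2] z hz; split; [apply: H1|apply: H2].
Qed.

Lemma margin : smallP (fun t => forall i j, (i < n.+1)%N -> (j < n.+1)%N ->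
  coord n i j -> ~~ eL Q i j -> ~~ eR Q i j -> ~~ circ Q i j ->
  forall z, (forall i' j', coord n i' j' -> `|z i' j' - y i' j'| <= t) -> SC Q z i j).
Proof.
apply: fin_min2 => i j hi hj.
have [hc|hc] := boolP (coord n i j); last first.
  by apply: smallP_triv => t hf; discriminate hf.
have [hl|hl] := boolP (eL Q i j); first by apply: smallP_triv => t _ hf; discriminate hf.
have [hr|hr] := boolP (eR Q i j); first by apply: smallP_triv => t _ _ hf; discriminate hf.
have [hci|hci] := boolP (circ Q i j); first by apply: smallP_triv => t _ _ _ hf; discriminate hf.
apply: smallP_impl (margin1 hc hl hr hci).
by move=> t H _ _ _ _; apply: H.
Qed.

Lemma core x : entry n x.1 x.2 -> Y x.1 x.2 < (a x.1 x.2)%:~R ->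
  exists2 t : R, 0 < t & forall d, `|d| <= t -> inGZ n lam (zp x d).
Proof.
move=> hx hlt.
case: HQc => _ [_ [_ [e [he He]]]].
have [t0 ht0 Ht0] := margin.
pose t := Num.min t0 (e / 2).
have htp : 0 < t by rewrite lt_min ht0 /=; lra.
have ht1 : t <= t0 by rewrite ge_min lexx.
have ht2 : t <= e / 2 by rewrite ge_min lexx orbT.
exists t => // d hd.
have hclose : forall i' j', coord n i' j' -> `|zp x d i' j' - y i' j'| <= t.
  move=> i' j' _; rewrite /zp; case: excluded_middle_informative => hh.
    by rewrite addrC addKr.
  by rewrite subrr normr0 ltW.
have hz : Chat n lam Q (zp x d).
  move=> i j hc.
  have [h1 [h2 [h3 h4]]] := QChat hc.
  have hcl := cr_parL hc; have hcr := cr_parR hc.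
  have hci : coord n i j \/ i = 0%N by left.
  have edge_case : forall k l, coord n k l \/ k = 0%N -> entry n k l ->
      Y i j = Y k l -> edge_adj n Q (i, j) (k, l) ->
      Yext n lam (zp x d) i j = Yext n lam (zp x d) k l.
    move=> k l hkl hekl eY hadj.
    have [hin|hout] := classic (edge_connected n Q x (i, j)).
      have hin2 : edge_connected n Q x (k, l) by apply: rt_trans hin _; apply: rt_step.
      case: hkl => [hckl|hk0].
        by rewrite !zpY_in // eY.
      exfalso; move: hin2; rewrite hk0; apply: Cnot => //.
      by apply: Y_row0; rewrite -hk0.
    have E1 : Yext n lam (zp x d) i j = Y i j by apply: zpY_out => //; right.
    have E2 : Yext n lam (zp x d) k l = Y k l.
      apply: zpY_out => //.
      case: hkl => hkl; last by left.
      right => hin2; apply: hout.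
      apply: rt_trans hin2 _; apply: rt_step.
      by move: hadj; rewrite /edge_adj /=; case=> h; [right|left].
    by rewrite E1 E2 eY.
  split.
    move=> hl; apply: edge_case => //; first exact: coord_parL.
      exact: h1.
    by left; split; [exact: coord_entry|split; [simpl; nat_arith|left]].
  split.
    move=> hr; apply: edge_case => //; first exact: coord_parR.
      exact: h2.
    by left; split; [exact: coord_entry|split; [simpl; nat_arith|right]].
  split.
    move=> hl hr hcc; rewrite zpY_out //; first exact: h3.
    by right; apply: Cnot => //; apply: h3.
  move=> hl hr hcc.
  have hi : (i < n.+1)%N by nat_arith.
  have hj : (j < n.+1)%N by nat_arith.
  exact: (Ht0 t htp ht1 i j hi hj hc hl hr hcc).
have [hgz _] := He (zp x d) (aff_single hz) (fun i j hc => le_lt_trans (hclose i j hc) (ltac:(lra) : t < e)).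
exact: hgz.
Qed.

Lemma pertL i j : coord n i j -> Y i j = Y i.-1 j -> ~ edge_connected n Q (i, j) (i.-1, j) ->
  Y i j = (a i j)%:~R /\ Y i.-1 j = (a i.-1 j)%:~R.
Proof.
move=> hc e hnc.
have hY1 := invQ (coord_entry hc); have hY2 := invQ (coord_parL hc).
have hcl := cr_parL hc.
have [h1|h1] := eqVneq (Y i j) (a i j)%:~R; last first.
  have lt1 : Y (i, j).1 (i, j).2 < (a (i, j).1 (i, j).2)%:~R by rewrite /= lt_neqAle h1 hY1.
  have [t ht Ht] := core (x := (i, j)) (coord_entry hc) lt1.
  have hd : `|- t| <= t by rewrite normrN gtr0_norm.
  have [+ _] := Ht (- t) hd i j hc.
  rewrite (zpY_in (i, j) (- t) i j hc (rt_refl _ _ _)) (zpY_out (i, j) (- t) i.-1 j hcl); first lra.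
  by case: hcl => hcl; [right=> hin; exact: hnc | left].
have [h2|h2] := eqVneq (Y i.-1 j) (a i.-1 j)%:~R; first by split.
have hcl' : coord n i.-1 j.
  case: hcl => // h0; exfalso; move: h2.
  have hE : entry n 0 j by rewrite -h0; exact: coord_parL hc.
  by rewrite h0 (Y_row0 hE) eqxx.
have lt2 : Y (i.-1, j).1 (i.-1, j).2 < (a (i.-1, j).1 (i.-1, j).2)%:~R.
  by rewrite /= lt_neqAle h2 hY2.
have [t ht Ht] := core (x := (i.-1, j)) (coord_parL hc) lt2.
have hd : `|t| <= t by rewrite gtr0_norm.
have [+ _] := Ht t hd i j hc.
rewrite (zpY_in (i.-1, j) t i.-1 j hcl' (rt_refl _ _ _)) (zpY_out (i.-1, j) t i j); first lra.
  by left.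
by right => /conn_sym.
Qed.

Lemma pertR i j : coord n i j -> Y i j = Y i.-1 j.+1 ->
  ~ edge_connected n Q (i, j) (i.-1, j.+1) ->
  Y i j = (a i j)%:~R /\ Y i.-1 j.+1 = (a i.-1 j.+1)%:~R.
Proof.
move=> hc e hnc.
have hY1 := invQ (coord_entry hc); have hY2 := invQ (coord_parR hc).
have hcr := cr_parR hc.
have [h1|h1] := eqVneq (Y i j) (a i j)%:~R; last first.
  have lt1 : Y (i, j).1 (i, j).2 < (a (i, j).1 (i, j).2)%:~R by rewrite /= lt_neqAle h1 hY1.
  have [t ht Ht] := core (x := (i, j)) (coord_entry hc) lt1.
  have hd : `|t| <= t by rewrite gtr0_norm.
  have [_ +] := Ht t hd i j hc.
  rewrite (zpY_in (i, j) t i j hc (rt_refl _ _ _)) (zpY_out (i, j) t i.-1 j.+1 hcr); first lra.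
  by case: hcr => hcr; [right=> hin; exact: hnc | left].
have [h2|h2] := eqVneq (Y i.-1 j.+1) (a i.-1 j.+1)%:~R; first by split.
have hcr' : coord n i.-1 j.+1.
  case: hcr => // h0; exfalso; move: h2.
  have hE : entry n 0 j.+1 by rewrite -h0; exact: coord_parR hc.
  by rewrite h0 (Y_row0 hE) eqxx.
have lt2 : Y (i.-1, j.+1).1 (i.-1, j.+1).2 < (a (i.-1, j.+1).1 (i.-1, j.+1).2)%:~R.
  by rewrite /= lt_neqAle h2 hY2.
have [t ht Ht] := core (x := (i.-1, j.+1)) (coord_parR hc) lt2.
have hd : `|- t| <= t by rewrite normrN gtr0_norm.
have [_ +] := Ht (- t) hd i j hc.
rewrite (zpY_in (i.-1, j.+1) (- t) i.-1 j.+1 hcr' (rt_refl _ _ _)) (zpY_out (i.-1, j.+1) (- t) i j); first lra.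
  by left.
by right => /conn_sym.
Qed.

Lemma rule_a i j : coord n i j -> Y i j = Y i.-1 j -> Y i j <> Y i.-1 j.+1 ->
  [/\ eL Q i j, ~~ eR Q i j, circ Q i j & a i j = a i.-1 j].
Proof.
move=> hc e1 e2.
have [h1 [h2 [h3 h4]]] := QChat hc.
have [hL hR] := Q2 hc.
have hnR : ~~ eR Q i j by apply/negP => /h2.
case hl: (eL Q i j).
  by have [ha hci] := hL hl; split.
exfalso.
have hYl := invQ (coord_parL hc).
have [g1 g2] := Qgz hc.
case hci: (circ Q i j).
  have ea := h3 (negbT hl) hnR hci.
  have hle : a i j <= a i.-1 j by rewrite -(ler_int R) -ea e1.
  have eq : a i j = a i.-1 j by apply/eqP; rewrite eq_le hle g1.
  have [hlt|hge] := ltP (a i.-1 j) (a i.-1 j.+1).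
    by have [_] := Q5 hc hlt eq; rewrite hl.
  have eq2 : a i.-1 j = a i.-1 j.+1 by apply/eqP; rewrite eq_le (le_trans g1 g2) hge.
  by move: (Q8 hc eq2 eq hci); rewrite hl (negbTE hnR).
have [hlo _] := h4 (negbT hl) hnR (negbT hci).
move: hlo; rewrite /SC; case: ifPn => h5 hlo.
  have : ((a i j - 1)%:~R : R) < (a i.-1 j)%:~R by lra.
  by rewrite ltr_int => h6; clear -h5 h6; lia.
lra.
Qed.

Lemma rule_b i j : coord n i j -> Y i j <> Y i.-1 j -> Y i j = Y i.-1 j.+1 ->
  [/\ eR Q i j, ~~ eL Q i j, circ Q i j & a i j = a i.-1 j.+1].
Proof.
move=> hc e1 e2.
have [h1 [h2 [h3 h4]]] := QChat hc; have [hL hR] := Q2 hc.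
have hnL : ~~ eL Q i j by apply/negP => /h1.
case hr: (eR Q i j); first by have [ha hci] := hR hr; split.
exfalso.
have [g1 g2] := Qgz hc.
have hne : a i j <> a i.-1 j.+1.
  move=> ea.
  case hci: (circ Q i j).
    have [hlt|hge] := ltP (a i.-1 j) (a i.-1 j.+1).
      by move: (Q6 hc hlt ea hci); rewrite hr.
    have eq2 : a i.-1 j = a i.-1 j.+1 by apply/eqP; rewrite eq_le (le_trans g1 g2) hge.
    have eq : a i j = a i.-1 j by rewrite ea eq2.
    by move: (Q8 hc eq2 eq hci); rewrite hr (negbTE hnL).
  have [_ hup] := h4 hnL (negbT hr) (negbT hci).
  by move: hup; rewrite ea eqxx; lra.
have hnc : ~ edge_connected n Q (i, j) (i.-1, j.+1).
  by move/connQ => [_ /= ha]; apply: hne.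
have [ea eb] := pertR hc e2 hnc.
apply: hne; apply/eqP.
by rewrite -(eqr_int R) -ea -eb e2 eqxx.
Qed.

Lemma EqConnQ k : forall m, entry n k m -> entry n k m.+1 -> Y k m = Y k m.+1 ->
  a k m = a k m.+1 /\ edge_connected n Q (k, m) (k, m.+1).
Proof.
elim: k => [|k IH] m h1 h2 e.
  have ea : a 0%N m = a 0%N m.+1.
    rewrite (Qgz0 h1) (Qgz0 h2); move: e; rewrite !Y0 => /eqP.
    by rewrite eqr_nat => /eqP ->.
  split => //.
  have [_ hl hr] := Q4 h1 h2 ea.
  have he : entry n 1 m by nat_arith.
  eapply rt_trans with (y := (1%N, m)); apply: rt_step.
    by right; split => //; split => //; left.
  by left; split => //; split => //; right.
have hcl : coord n k.+1 m by apply: entry_coord.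
have hcr : coord n k.+1 m.+1 by apply: entry_coord.
have [g1 g2] := gzy hcl; have [g3 g4] := gzy hcr; simpl in g1, g2, g3, g4.
have ep : Y k m.+1 = Y k.+1 m by lra.
have [hRl al] : eR Q k.+1 m /\ a k.+1 m = a k m.+1.
  have [y1|y1] := eqVneq (Y k.+1 m) (Y k m).
    have [ea ec] := IH m (coord_parL hcl) (coord_parR hcl) (etrans (esym y1) (esym ep)).
    have [q1 q2] := Qgz hcl; simpl in q1, q2.
    have ea2 : a k.+1 m = a k m by apply/eqP; rewrite eq_le q1 andbT ea q2.
    have [_ _ hr] := Q7 hcl ea ea2 ec.
    by split => //; rewrite ea2 ea.
  by have [hr _ _ ha] := rule_b hcl (elimN eqP y1) (esym ep); split.
have [hLr ar] : eL Q k.+1 m.+1 /\ a k.+1 m.+1 = a k m.+1.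
  have e2 : Y k.+1 m.+1 = Y k m.+1 by lra.
  have [y1|y1] := eqVneq (Y k.+1 m.+1) (Y k m.+2).
    have [ea ec] := IH m.+1 (coord_parL hcr) (coord_parR hcr) (etrans (esym e2) y1).
    have [q1 q2] := Qgz hcr; simpl in q1, q2.
    have ea2 : a k.+1 m.+1 = a k m.+1 by apply/eqP; rewrite eq_le q1 andbT ea q2.
    by have [_ hl _] := Q7 hcr ea ea2 ec; split.
  by have [hl _ _ ha] := rule_a hcr e2 (elimN eqP y1); split.
split; first by rewrite al ar.
eapply rt_trans with (y := (k, m.+1)); apply: rt_step.
  by left; split => //; split => //; right.
by right; split => //; split => //; left.
Qed.

Lemma rule_c i j : coord n i j -> Y i j = Y i.-1 j -> Y i j = Y i.-1 j.+1 ->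
  [/\ eL Q i j, eR Q i j, circ Q i j & a i j = a i.-1 j].
Proof.
move=> hc e1 e2.
have [ea ec] := EqConnQ (coord_parL hc) (coord_parR hc) (etrans (esym e1) e2).
have [q1 q2] := Qgz hc.
have ea2 : a i j = a i.-1 j by apply/eqP; rewrite eq_le q1 andbT ea q2.
by have [? ? ?] := Q7 hc ea ea2 ec; split.
Qed.

Definition NC (al ar ai : int) (yv : R) :=
  [/\ yv < ai%:~R, (2%:Z <= ai - al -> (ai - 1)%:~R < yv), (al < ar -> ai != al),
      al <= ai & ai <= ar].

Lemma rule_s i j : coord n i j -> Y i j <> Y i.-1 j -> Y i j <> Y i.-1 j.+1 ->
  [/\ ~~ eL Q i j, ~~ eR Q i j,
      (circ Q i j -> Y i j = (a i j)%:~R /\ a i.-1 j < a i j) &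
      (~~ circ Q i j -> NC (a i.-1 j) (a i.-1 j.+1) (a i j) (Y i j))].
Proof.
move=> hc e1 e2.
have [h1 [h2 [h3 h4]]] := QChat hc.
have hnL : ~~ eL Q i j by apply/negP => /h1.
have hnR : ~~ eR Q i j by apply/negP => /h2.
have [g1 g2] := Qgz hc.
split => // hci.
  have ea := h3 hnL hnR hci; split => //.
  rewrite lt_neqAle g1 andbT; apply/eqP => eq.
  have [hlt|hge] := ltP (a i.-1 j) (a i.-1 j.+1).
    by have [_] := Q5 hc hlt (esym eq); rewrite (negbTE hnL).
  have eq2 : a i.-1 j = a i.-1 j.+1 by apply/eqP; rewrite eq_le (le_trans g1 g2) hge.
  by move: (Q8 hc eq2 (esym eq) hci); rewrite (negbTE hnL) (negbTE hnR).
have [hlo hup] := h4 hnL hnR hci.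
split => //.
- move: hup; case: eqP => [<-|_] hup //.
  have := invQ (coord_parR hc); lra.
- by move=> h; move: hlo; rewrite h.
- move=> hlt; apply/eqP => eq.
  by have [hc' _] := Q5 hc hlt eq; rewrite hc' in hci.
Qed.

End QS.

Lemma NC_uniq al ar a1 a2 yv : NC al ar a1 yv -> NC al ar a2 yv -> a1 = a2.
Proof.
have key : forall b1 b2, NC al ar b1 yv -> NC al ar b2 yv -> b1 < b2 -> False.
  move=> b1 b2 [y1 l1 n1 g1 g1'] [y2 l2 n2 g2 g2'] hlt.
  case: (leP 2%:Z (b2 - al)) => h.
    have := l2 h.
    have : (b1%:~R : R) <= (b2 - 1)%:~R by rewrite ler_int; clear -hlt; lia.
    lra.
  have e1 : b1 = al by clear -h hlt g1; lia.
  have : al < ar by clear -h hlt g1 g2'; lia.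
  by move=> /n1; rewrite e1 eqxx.
move=> h1 h2; case: (ltgtP a1 a2) => // h.
- by exfalso; exact: key h1 h2 h.
- by exfalso; exact: key h2 h1 h.
Qed.

Lemma NC_circ al ar a1 a2 yv : NC al ar a1 yv -> yv = a2%:~R -> al < a2 -> False.
Proof.
move=> [y1 l1 n1 g1 g1'] e hlt.
have h12 : a2 < a1 by rewrite -(ltr_int R) -e.
case: (leP 2%:Z (a1 - al)) => h.
  by have := l1 h; rewrite e ltr_int => h'; clear -h12 h'; lia.
by clear -h h12 hlt; lia.
Qed.

Lemma agree QA QB : enhanced n lam QA -> inCell n lam QA y ->
  enhanced n lam QB -> inCell n lam QB y -> same_pattern n QA QB.
Proof.
move=> e1 c1 e2 c2.
suff H : forall i j, entry n i j -> [/\ pa QA i j = pa QB i j, circ QA i j = circ QB i j,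
    ((0 < i)%N -> eL QA i j = eL QB i j) & ((0 < i)%N -> eR QA i j = eR QB i j)].
  by move=> i j /H.
elim=> [|i IH] j hj.
  split => //; first by rewrite (Qgz0 e1) // (Qgz0 e2).
  by rewrite (Q1 e1 hj) (Q1 e2 hj).
have hc : coord n i.+1 j by apply: entry_coord.
have [al _ _ _] := IH j (coord_parL hc).
have [ar _ _ _] := IH j.+1 (coord_parR hc).
have [y1|y1] := eqVneq (Y i.+1 j) (Y i j); have [y2|y2] := eqVneq (Y i.+1 j) (Y i j.+1).
- have [l1 r1 cc1 a1] := rule_c e1 c1 hc y1 y2.
  have [l2 r2 cc2 a2] := rule_c e2 c2 hc y1 y2.
  simpl in a1, a2.
  by split; [rewrite a1 a2 al | rewrite cc1 cc2 | rewrite l1 l2 | rewrite r1 r2].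
- have [l1 r1 cc1 a1] := rule_a e1 c1 hc y1 (elimN eqP y2).
  have [l2 r2 cc2 a2] := rule_a e2 c2 hc y1 (elimN eqP y2).
  simpl in a1, a2.
  by split; [rewrite a1 a2 al | rewrite cc1 cc2 | rewrite l1 l2 | rewrite (negbTE r1) (negbTE r2)].
- have [r1 l1 cc1 a1] := rule_b e1 c1 hc (elimN eqP y1) y2.
  have [r2 l2 cc2 a2] := rule_b e2 c2 hc (elimN eqP y1) y2.
  simpl in a1, a2.
  by split; [rewrite a1 a2 ar | rewrite cc1 cc2 | rewrite (negbTE l1) (negbTE l2) | rewrite r1 r2].
have [l1 r1 cc1 nc1] := rule_s e1 c1 hc (elimN eqP y1) (elimN eqP y2).
have [l2 r2 cc2 nc2] := rule_s e2 c2 hc (elimN eqP y1) (elimN eqP y2).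
simpl in cc1, cc2, nc1, nc2.
rewrite al ar in cc1 nc1.
have E : pa QA i.+1 j = pa QB i.+1 j /\ circ QA i.+1 j = circ QB i.+1 j.
  case h1: (circ QA i.+1 j); case h2: (circ QB i.+1 j).
  - have [ea1 _] := cc1 h1; have [ea2 _] := cc2 h2.
    split => //; apply/eqP; by rewrite -(eqr_int R) -ea1 -ea2 eqxx.
  - have [ea1 lt1] := cc1 h1.
    by exfalso; apply: (NC_circ (nc2 (negbT h2)) ea1 lt1).
  - have [ea2 lt2] := cc2 h2.
    by exfalso; apply: (NC_circ (nc1 (negbT h1)) ea2 lt2).
  - by split => //; apply: NC_uniq (nc1 (negbT h1)) (nc2 (negbT h2)).
case: E => E1 E2.
by split => // _; [rewrite (negbTE l1) (negbTE l2) | rewrite (negbTE r1) (negbTE r2)].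
Qed.

Lemma main_ex : exists P : epattern,
  [/\ enhanced n lam P, inCell n lam P y &
      forall Q : epattern, enhanced n lam Q -> inCell n lam Q y -> same_pattern n Q P].
Proof.
exists PP; split; [exact: enhP | exact: cellP |].
by move=> Q hQe hQc; apply: agree hQe hQc enhP cellP.
Qed.

End Main.

Theorem lemma5p1 (R : realType) (n : nat) (lam : nat -> nat)
  (Hlam : is_partition n lam) (y : nat -> nat -> R) :
  inGZ n lam y ->
  exists P : epattern,
    [/\ enhanced n lam P, inCell n lam P y &
        forall Q : epattern, enhanced n lam Q -> inCell n lam Q y -> same_pattern n Q P].
Proof. move=> Hy; exact: (@main_ex R n lam Hlam y Hy). Qed.
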